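(* Impose (A1)–(A6), one of the support cases (A7.1), (A7.2), (A7.3)(a), (A7.3)(b), and (A8''). Fix $x\in\mathcal X$, $u\in[0,1]$, and let $\underline\Delta,\overline\Delta$ and $\underline\Lambda,\overline\Lambda$ be the functions defined in the context for that support case. Then $$\min\{\underline\Delta(x,u),\underline\Lambda(x,u)\}\le\Delta^{OO}_{Y^*}(x,u)\le\max\{\overline\Delta(x,u),\overline\Lambda(x,u)\}.$$
   Context: Standing setup. On a common probability space: $X$ (covariates, support $\mathcal X$), $Z$ (instrument, support $\mathcal Z$), $W=(X,Z)$; latent real random variables $U,V$, jointly continuously distributed conditional on $X$, with $U\mid X$ and $V\mid X$ each Uniform$[0,1]$ (their joint dependence unrestricted); real potential outcomes of interest $Y_0^*,Y_1^*$. Given functions $P:\mathcal X\times\mathcal Z\to[0,1]$ and $Q:\{0,1\}\times\mathcal X\to[0,1]$, define the treatment $D=\mathbf 1\{P(W)\ge U\}$, potential selection indicators $S_d=\mathbf 1\{Q(d,X)\ge V\}$ ($d\in\{0,1\}$), selection indicator $S=DS_1+(1-D)S_0$, potential observable outcomes $Y_d=S_dY_d^*$ and observable outcome $Y=DY_1+(1-D)Y_0$. For $x\in\mathcal X$, $u\in[0,1]$, $d\in\{0,1\}$: $m_d^Y(x,u)=\mathbb E[Y_d\mid X=x,U=u]$, $m_d^S(x,u)=\mathbb E[S_d\mid X=x,U=u]$, $\Delta_S(x,u)=m_1^S(x,u)-m_0^S(x,u)$, and $\Delta^{OO}_{Y^*}(x,u)=\mathbb E[Y_1^*-Y_0^*\mid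 X=x,U=u,S_0=1,S_1=1]$. Ratios appearing are assumed well defined. Assumptions: (A1) $Z$ is independent of $(U,V,Y_0^*,Y_1^* )$ conditional on $X$; (A2) the distribution of $P(W)$ given $X$ is nondegenerate; (A3) $\mathbb E|Y_d^*|<\infty$ and $\mathbb E[(Y_d^* )^2]<\infty$; (A4) $0<\mathbb P[D=1\mid X]<1$; (A5) $X$ is invariant to counterfactual manipulation of treatment; (A6) $Y_0^*,Y_1^*$ have a common support $\mathcal Y^*\subseteq\mathbb R$; $\underline y^*=\inf\mathcal Y^*$, $\overline y^*=\sup\mathcal Y^*$ (possibly infinite), known. Support cases: (A7.1) $\underline y^*>-\infty$, $\overline y^*=+\infty$, $\mathcal Y^*$ an interval; (A7.2) $\underline y^*=-\infty$, $\overline y^*<\infty$, $\mathcal Y^*$ an interval; (A7.3) both finite and either (a) $\mathcal Y^*$ an interval or (b) $\underline y^*,\overline y^*\in\mathcal Y^*$. (A8'') (monotone selection, unknown direction) either $Q(1,x)>Q(0,x)>0$ for all $x\in\mathcal X$, or $Q(0,x)>Q(1,x)>0$ for all $x\in\mathcal X$. Functions (at $(x,u)$): under (A7.1), $\underline\Delta=\underline y^*-\frac{m_0^Y}{m_0^S}$, $\overline\Delta=\frac{m_1^Y-\underline y^*\Delta_S}{m_0^S}-\frac{m_0^Y}{m_0^S}$, $\underline\Lambda=\frac{m_1^Y}{m_1^S}-\frac{m_0^Y-\underline y^*(-\Delta_S)}{m_1^S}$, $\overline\Lambda=\frac{m_1^Y}{m_1^S}-\underline y^*$; under (A7.2), $\underline\Delta=\frac{m_1^Y-\overline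 y^*\Delta_S}{m_0^S}-\frac{m_0^Y}{m_0^S}$, $\overline\Delta=\overline y^*-\frac{m_0^Y}{m_0^S}$, $\underline\Lambda=\frac{m_1^Y}{m_1^S}-\overline y^*$, $\overline\Lambda=\frac{m_1^Y}{m_1^S}-\frac{m_0^Y-\overline y^*(-\Delta_S)}{m_1^S}$; under (A7.3), $\underline\Delta=\max\{\frac{m_1^Y-\overline y^*\Delta_S}{m_0^S},\underline y^*\}-\frac{m_0^Y}{m_0^S}$, $\overline\Delta=\min\{\frac{m_1^Y-\underline y^*\Delta_S}{m_0^S},\overline y^*\}-\frac{m_0^Y}{m_0^S}$, $\underline\Lambda=\frac{m_1^Y}{m_1^S}-\min\{\frac{m_0^Y-\underline y^*(-\Delta_S)}{m_1^S},\overline y^*\}$, $\overline\Lambda=\frac{m_1^Y}{m_1^S}-\max\{\frac{m_0^Y-\overline y^*(-\Delta_S)}{m_1^S},\underline y^*\}$. *)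

(* Defs.v *)
From HB Require Import structures.
From mathcomp Require Import all_boot all_order all_algebra.
From mathcomp Require Import all_classical all_reals all_analysis.
Set Implicit Arguments. Unset Strict Implicit. Unset Printing Implicit Defensive.
Import Order.TTheory GRing.Theory Num.Theory.
Import numFieldNormedType.Exports.
Local Open Scope classical_set_scope.
Local Open Scope ring_scope.

Section Defs.
Context (R : realType) (d : measure_display) (Omega : measurableType d)
        (P : probability Omega R).

Definition cond_prob_version {dX} {TX : measurableType dX}
    (X : Omega -> TX) (A : set Omega) (g : TX -> R) : Prop :=
  measurable_fun setT g /\
  forall C : set TX, measurable C ->
    P (A `&` (X @^-1` C)) = (\int[P]_(w in X @^-1` C) (g (X w))%:E)%E.

(* Conditional independence of Z and W given X:
   P[Z in A, W in B | X] = P[Z in A | X] * P[W in B | X]  a.s.,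
   i.e. the product of any versions is a version of the joint one. *)
Definition cond_indep {dX dZ dW} {TX : measurableType dX}
    {TZ : measurableType dZ} {TW : measurableType dW}
    (X : Omega -> TX) (Z : Omega -> TZ) (W : Omega -> TW) : Prop :=
  forall (A : set TZ) (B : set TW), measurable A -> measurable B ->
  forall gA gB : TX -> R,
    cond_prob_version X (Z @^-1` A) gA ->
    cond_prob_version X (W @^-1` B) gB ->
    forall C : set TX, measurable C ->
      P ((Z @^-1` A) `&` (W @^-1` B) `&` (X @^-1` C)) =
      (\int[P]_(w in X @^-1` C) (gA (X w) * gB (X w))%:E)%E.

Definition is_condexp {dG} {TG : measurableType dG}
    (G : Omega -> TG) (f : Omega -> R) (g : TG -> R) : Prop :=
  measurable_fun setT g /\ P.-integrable setT (EFin \o (g \o G)) /\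
  forall A : set TG, measurable A ->
    (\int[P]_(w in G @^-1` A) (f w)%:E = \int[P]_(w in G @^-1` A) (g (G w))%:E)%E.

(* g is a version of E[f | G, E] (conditional expectation given sigma(G)
   under the conditional measure P(. | E)). *)
Definition is_condexp_on {dG} {TG : measurableType dG}
    (G : Omega -> TG) (E : set Omega) (f : Omega -> R) (g : TG -> R) : Prop :=
  measurable_fun setT g /\ P.-integrable E (EFin \o (g \o G)) /\
  forall A : set TG, measurable A ->
    (\int[P]_(w in G @^-1` A `&` E) (f w)%:E
     = \int[P]_(w in G @^-1` A `&` E) (g (G w))%:E)%E.

Definition rv_support (Y : Omega -> R) : set R :=
  [set y | forall e : R, 0 < e -> (0 < P (Y @^-1` ball y e))%E].

End Defs.

Inductive supp_case := A7_1 | A7_2 | A7_3.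

Definition support_case {R : realType} (c : supp_case) (Ys : set R) : Prop :=
  let ylo := ereal_inf (EFin @` Ys) in
  let yhi := ereal_sup (EFin @` Ys) in
  match c with
  | A7_1 => (-oo < ylo)%E /\ yhi = +oo%E /\ is_interval Ys
  | A7_2 => ylo = -oo%E /\ (yhi < +oo)%E /\ is_interval Ys
  | A7_3 => ylo \is a fin_num /\ yhi \is a fin_num /\
            (is_interval Ys \/ (Ys (fine ylo) /\ Ys (fine yhi)))
  end.

Section Bounds.
Context {R : realType}.
(* ylo, yhi : the (finite, where used) endpoints; m0Y m1Y m0S m1S : values of
   m_0^Y, m_1^Y, m_0^S, m_1^S at (x,u); dS = Delta_S = m1S - m0S *)
Variables (ylo yhi m0Y m1Y m0S m1S : R).
Let dS := m1S - m0S.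

Definition Delta_lo (c : supp_case) : R :=
  match c with
  | A7_1 => ylo - m0Y / m0S
  | A7_2 => (m1Y - yhi * dS) / m0S - m0Y / m0S
  | A7_3 => Num.max ((m1Y - yhi * dS) / m0S) ylo - m0Y / m0S
  end.

Definition Delta_hi (c : supp_case) : R :=
  match c with
  | A7_1 => (m1Y - ylo * dS) / m0S - m0Y / m0S
  | A7_2 => yhi - m0Y / m0S
  | A7_3 => Num.min ((m1Y - ylo * dS) / m0S) yhi - m0Y / m0S
  end.

Definition Lambda_lo (c : supp_case) : R :=
  match c with
  | A7_1 => m1Y / m1S - (m0Y - ylo * (- dS)) / m1S
  | A7_2 => m1Y / m1S - yhi
  | A7_3 => m1Y / m1S - Num.min ((m0Y - ylo * (- dS)) / m1S) yhi
  end.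

Definition Lambda_hi (c : supp_case) : R :=
  match c with
  | A7_1 => m1Y / m1S - ylo
  | A7_2 => m1Y / m1S - (m0Y - yhi * (- dS)) / m1S
  | A7_3 => m1Y / m1S - Num.max ((m0Y - yhi * (- dS)) / m1S) ylo
  end.
End Bounds.

(* Main.v *)
Require Import Defs.
From HB Require Import structures.
From mathcomp Require Import all_boot all_order all_algebra.
From mathcomp Require Import all_classical all_reals all_analysis.
From mathcomp Require Import ring lra.
Import Order.TTheory GRing.Theory Num.Theory.
Import numFieldNormedType.Exports.
Local Open Scope classical_set_scope.
Local Open Scope ring_scope.

Lemma ae_supp (R : realType) d (Omega : measurableType d) (P : probability Omega R)
  (Y : Omega -> R) : measurable_fun setT Y -> {ae P, forall w, rv_support P Y (Y w)}.
Proof.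
move=> mY.
have mB : forall x e, measurable (Y @^-1` ball (x:R) e).
  move=> x e; rewrite -[X in measurable X]setTI; apply: mY => //.
  exact: measurable_realfun.open_measurable (ball_open _ _).
pose F k : set Omega := match unpickle k with
  | Some (c, r) => if P (Y @^-1` ball (ratr c : R) (ratr r)) == 0%E
                   then Y @^-1` ball (ratr c : R) (ratr r) else set0
  | None => set0 end.
have NF : P.-negligible (\bigcup_k F k).
  apply: negligible_bigcup => k; rewrite /F.
  case: (unpickle k) => [[c r]|]; last exact: negligible_set0.
  case: ifPn => [/eqP P0|_]; last exact: negligible_set0.
  by exists (Y @^-1` ball (ratr c : R) (ratr r)); split.
apply: (negligibleS _ NF).
move=> w /= Nw.
have [e [e0 Pe]] : exists e : R, 0 < e /\ P (Y @^-1` ball (Y w) e) = 0%E.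
  apply: contrapT => H; apply: Nw => e e0.
  rewrite lt0e measure_ge0 andbT; apply/negP => /eqP He; apply: H; by exists e.
have [c [r [/= inB sB]]] := @open_subball_rat R (ball (Y w) e) (Y w) (ball_open _ _)
   (mem_set (ballxx _ e0)).
exists (pickle (c, r)); first by [].
rewrite /F (pickleK (c, r)).
have -> : P (Y @^-1` ball (ratr c : R) (ratr r)) = 0%E.
  apply/eqP; rewrite eq_le measure_ge0 andbT -Pe; apply: le_measure.
  - by rewrite inE; apply: mB.
  - by rewrite inE; apply: mB.
  - by move=> z; rewrite /preimage /= => /sB.
rewrite eqxx; move: inB; rewrite inE; exact.
Qed.
Section IntHelp.
Context (R : realType) (d : measure_display) (Omega : measurableType d)
  (mu : {measure set Omega -> \bar R}).
Lemma intRD (D : set Omega) (f g : Omega -> R) : measurable D ->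
  mu.-integrable D (EFin \o f) -> mu.-integrable D (EFin \o g) ->
  mu.-integrable D (EFin \o (fun x => f x + g x)).
Proof.
move=> mD1 i1 i2; apply: (eq_integrable _ _ _ _ (integrableD mD1 i1 i2)) => //.
Qed.
Lemma intRZ (D : set Omega) (c : R) (f : Omega -> R) : measurable D ->
  mu.-integrable D (EFin \o f) ->
  mu.-integrable D (EFin \o (fun x => c * f x)).
Proof.
move=> mD1 i1; apply: (eq_integrable _ _ _ _ (integrableZl mD1 c i1)) => //.
Qed.
Lemma intRN (D : set Omega) (f : Omega -> R) :
  mu.-integrable D (EFin \o f) ->
  mu.-integrable D (EFin \o (fun x => - f x)).
Proof. by move=> i1; have := integrableN i1. Qed.
End IntHelp.

Section Main.
Context (R : realType) (d : measure_display) (Omega : measurableType d)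
  (P : probability Omega R) (dT : measure_display) (T : measurableType dT)
  (G : Omega -> T) (mG : measurable_fun setT G) (E : set Omega) (mE : measurable E)
  (a D k : T -> R) (ma : measurable_fun setT a) (mD : measurable_fun setT D)
  (mk : measurable_fun setT k)
  (ia : P.-integrable setT (EFin \o (a \o G)))
  (ik : P.-integrable setT (EFin \o (k \o G)))
  (iD : P.-integrable E (EFin \o (D \o G))).

Let mI A : measurable A -> measurable (G @^-1` A).
Proof. by move=> mA; rewrite -[X in measurable X]setTI; apply: mG. Qed.

Lemma piece_null (A : set T) (mA : measurable A) (q delta : R) (dpos : 0 < delta)
  (H1 : P (G @^-1` A `&` E) = (\int[P]_(w in G @^-1` A) (a (G w))%:E)%E)
  (H2 : \int[P]_(w in G @^-1` A `&` E) D (G w) <= \int[P]_(w in G @^-1` A) k (G w))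
  (HA : forall t, A t -> q <= D t /\ k t + delta <= q * a t) :
  P (G @^-1` A) = 0%E.
Proof.
set I := G @^-1` A.
have mII : measurable I := mI _ mA.
have mIE : measurable (I `&` E) := measurableI _ _ mII mE.
have iDIE : P.-integrable (I `&` E) (EFin \o (D \o G)).
  exact: integrableS mE mIE (@subIsetr _ _ _) iD.
have iaI : P.-integrable I (EFin \o (a \o G)).
  exact: integrableS measurableT mII (@subsetT _ _) ia.
have ikI : P.-integrable I (EFin \o (k \o G)).
  exact: integrableS measurableT mII (@subsetT _ _) ik.
have e1 : fine (P (I `&` E)) = \int[P]_(w in I) a (G w) by rewrite H1.
have s1 : q * fine (P (I `&` E)) <= \int[P]_(w in I) k (G w).
  apply: le_trans H2; rewrite -Rintegral_cst //.
  apply: le_Rintegral => //.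
    exact: finite_measure_integrable_cst.
  by move=> w [/HA []].
have s2 : \int[P]_(w in I) (k (G w) + delta) <= \int[P]_(w in I) (q * a (G w)).
  apply: le_Rintegral => //.
  - apply: (@intRD _ _ _ _ _ (k \o G) (fun=> delta) mII ikI); exact: finite_measure_integrable_cst.
  - exact: (@intRZ _ _ _ _ _ q (a \o G) mII iaI).
  - by move=> w /HA [].
have e2 : \int[P]_(w in I) (k (G w) + delta) =
    \int[P]_(w in I) k (G w) + delta * fine (P I).
  rewrite (@RintegralD _ _ _ P I (k \o G) (fun=> delta)) //.
    by rewrite Rintegral_cst.
  exact: finite_measure_integrable_cst.
have e3 : \int[P]_(w in I) (q * a (G w)) = q * \int[P]_(w in I) a (G w).
  by rewrite (@RintegralZl _ _ _ P I (a \o G)).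
rewrite e2 e3 -e1 in s2.
have : delta * fine (P I) <= 0 by lra.
rewrite pmulr_rle0 // => fle.
apply/eqP; rewrite eq_le measure_ge0 andbT.
rewrite -(fineK (fin_num_measure P _ mII)) lee_fin //.
Qed.

Lemma mset_le (f g : T -> R) : measurable_fun setT f -> measurable_fun setT g ->
  measurable [set t | f t <= g t].
Proof.
move=> mf mg; rewrite -[X in measurable X]setTI.
exact: (measurable_realfun.measurable_fun_ler mf mg).
Qed.
Lemma mset_lt (f g : T -> R) : measurable_fun setT f -> measurable_fun setT g ->
  measurable [set t | f t < g t].
Proof.
move=> mf mg; rewrite -[X in measurable X]setTI.
exact: (measurable_realfun.measurable_fun_ltr mf mg).
Qed.

Let Nn (n : nat) : R := n.+1%:R.
Let ep (n : nat) : R := (Nn n ^+ 2 *+ 2)^-1.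
Let qq (n j : nat) : R := - Nn n + j%:R * ep n.
Let Apc (n j : nat) : set T :=
  [set t | 0 <= a t] `&` [set t | a t <= Nn n] `&`
  [set t | k t + (Nn n)^-1 < a t * D t] `&` [set t | qq n j <= D t] `&`
  [set t | D t < qq n j + ep n].

Let Nn_gt0 n : 0 < Nn n. Proof. by rewrite /Nn ltr0Sn. Qed.
Let ep_gt0 n : 0 < ep n.
Proof. by rewrite /ep invr_gt0 pmulrn_rgt0 // exprn_gt0. Qed.

Let mApc n j : measurable (Apc n j).
Proof.
have mc : forall c : R, measurable_fun setT (fun _ : T => c) by move=> c; exact: measurable_cst.
repeat apply: measurableI.
- exact: mset_le.
- exact: mset_le.
- apply: mset_lt.
    exact: (measurable_realfun.measurable_funD mk (mc _)).
  exact: (measurable_realfun.measurable_funM ma mD).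
- exact: mset_le.
- apply: mset_lt => //.
Qed.

Let Apc_prop n j t : Apc n j t ->
  qq n j <= D t /\ k t + (Nn n)^-1 / 2 <= qq n j * a t.
Proof.
move=> [[[[a0 aN] kD] qD] Dq]; rewrite /= in a0 aN kD qD Dq; split => //.
have h1 : a t * D t <= a t * (qq n j + ep n) by rewrite ler_wpM2l // ltW.
have h2 : a t * ep n <= Nn n * ep n by rewrite ler_wpM2r // ltW.
have h3 : Nn n * ep n = (Nn n)^-1 / 2.
  by rewrite /ep; field; rewrite addrC natr1 pnatr_eq0.
rewrite mulrDr in h1; rewrite [qq n j * _]mulrC.
set x := (Nn n)^-1 in kD h3 *; lra.
Qed.

Lemma main_ae
  (H1 : forall A, measurable A ->
     P (G @^-1` A `&` E) = (\int[P]_(w in G @^-1` A) (a (G w))%:E)%E)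
  (H2 : forall A, measurable A ->
     \int[P]_(w in G @^-1` A `&` E) D (G w) <= \int[P]_(w in G @^-1` A) k (G w)) :
  {ae P, forall w, 0 <= a (G w) -> a (G w) * D (G w) <= k (G w)}.
Proof.
have NF : P.-negligible (\bigcup_n \bigcup_j (G @^-1` Apc n j)).
  apply: negligible_bigcup => n; apply: negligible_bigcup => j.
  exists (G @^-1` Apc n j); split => //; first exact: mI.
  apply: (@piece_null _ (mApc n j) (qq n j) ((Nn n)^-1 / 2)).
  - by rewrite divr_gt0 // invr_gt0.
  - exact: H1.
  - exact: H2.
  - exact: Apc_prop.
apply: (negligibleS _ NF) => w /= Hw.
have [a0 lt] : 0 <= a (G w) /\ k (G w) < a (G w) * D (G w).
  split; first by apply: contrapT => H; apply: Hw => /H.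
  by rewrite ltNge; apply/negP => H; apply: Hw.
set t := G w in a0 lt *.
set M := a t + `|D t| + (a t * D t - k t)^-1.
have M0 : 0 <= M.
  by rewrite /M !addr_ge0 // ltW // invr_gt0 subr_gt0.
set n := Num.Def.archi_bound M.
have MN : M < Nn n.
  apply: (lt_le_trans (archi_boundP M0)); by rewrite /Nn ler_nat.
have aN : a t <= Nn n.
  apply/ltW/(le_lt_trans _ MN); rewrite /M -addrA lerDl addr_ge0 //.
  by rewrite ltW // invr_gt0 subr_gt0.
have DN : - Nn n < D t.
  rewrite ltrNl; apply: (le_lt_trans _ MN); rewrite /M.
  have : 0 <= a t + (a t * D t - k t)^-1 by rewrite addr_ge0 // ltW // invr_gt0 subr_gt0.
  have : - D t <= `|D t| by rewrite ler_normr lexx orbT.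
  lra.
have kN : k t + (Nn n)^-1 < a t * D t.
  have iM : (a t * D t - k t)^-1 < Nn n.
    apply: (le_lt_trans _ MN); rewrite /M; have := normr_ge0 (D t); lra.
  move: iM; rewrite invf_plt ?posrE ?subr_gt0 // ?Nn_gt0 // => hh; set x := (Nn n)^-1 in hh *; lra.
set x := (D t + Nn n) / ep n.
have x0 : 0 <= x by rewrite /x divr_ge0 // ?(ltW (ep_gt0 n)) //; lra.
exists n => //; exists (Num.Def.trunc x) => //.
have /andP[jl jr] := truncn_itv x0.
move: jl jr; rewrite /x ler_pdivlMr ?ep_gt0 // ltr_pdivrMr ?ep_gt0 // -natr1 => jl jr.
rewrite /Apc /qq /= -/t.
set J := (Num.Def.trunc _)%:R in jl jr *.
rewrite mulrDl mul1r in jr.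
split; [split; [split; [split|]|]|] => //=; set y := (Nn n)^-1 in kN *; lra.
Qed.
End Main.
Section Gen.
Context (R : realType) (d : measure_display) (Omega : measurableType d)
  (P : probability Omega R).

Lemma mset_leO (f g : Omega -> R) : measurable_fun setT f -> measurable_fun setT g ->
  measurable [set t | f t <= g t].
Proof.
move=> mf mg; rewrite -[X in measurable X]setTI.
exact: (measurable_realfun.measurable_fun_ler mf mg).
Qed.

Lemma fine_P1 (D : set Omega) : measurable D -> fine (P D) = \int[P]_(w in D) 1.
Proof. by move=> mD; rewrite Rintegral_cst // mul1r. Qed.

Lemma Rint_null (N A B : set Omega) (f : Omega -> R) : measurable N -> P N = 0%E ->
  measurable A -> measurable B -> (forall w, ~ N w -> (A w <-> B w)) ->
  P.-integrable setT (EFin \o f) ->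
  \int[P]_(w in A) f w = \int[P]_(w in B) f w.
Proof.
move=> mN PN mA mB AB intf.
rewrite /Rintegral (negligible_integral mN mA _ PN); last first.
  exact: integrableS measurableT mA (@subsetT _ _) intf.
rewrite (negligible_integral mN mB _ PN); last first.
  exact: integrableS measurableT mB (@subsetT _ _) intf.
suff -> : A `\` N = B `\` N by [].
apply/seteqP; split => w [Aw Nw]; split => //; exact/(AB w Nw).
Qed.

Lemma Pnull_eq (N A B : set Omega) : measurable N -> P N = 0%E ->
  measurable A -> measurable B -> (forall w, ~ N w -> (A w <-> B w)) ->
  fine (P A) = fine (P B).
Proof.
move=> mN PN mA mB AB; rewrite !fine_P1 //; apply: (@Rint_null N A B (fun=> 1)) => //.
exact: finite_measure_integrable_cst.
Qed.

Lemma Rint_ge_null (N D : set Omega) (f : Omega -> R) (c : R) : measurable N ->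
  P N = 0%E -> measurable D -> P.-integrable setT (EFin \o f) ->
  (forall w, ~ N w -> D w -> c <= f w) ->
  c * fine (P D) <= \int[P]_(w in D) f w.
Proof.
move=> mN PN mD intf H.
have mDN : measurable (D `\` N) by exact: measurableD.
rewrite (@Rint_null N D (D `\` N)) //; last by move=> w Nw; split=> [Dw|[]//].
rewrite (@Pnull_eq N D (D `\` N)) // -?Rintegral_cst //; last by move=> w Nw; split=> [Dw|[]//].
apply: le_Rintegral => //.
- exact: finite_measure_integrable_cst.
- exact: integrableS measurableT mDN (@subsetT _ _) intf.
- by move=> w [Dw Nw]; apply: H.
Qed.

Lemma Rint_le_null (N D : set Omega) (f : Omega -> R) (c : R) : measurable N ->
  P N = 0%E -> measurable D -> P.-integrable setT (EFin \o f) ->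
  (forall w, ~ N w -> D w -> f w <= c) ->
  \int[P]_(w in D) f w <= c * fine (P D).
Proof.
move=> mN PN mD intf H.
have mDN : measurable (D `\` N) by exact: measurableD.
rewrite (@Rint_null N D (D `\` N)) //; last by move=> w Nw; split=> [Dw|[]//].
rewrite (@Pnull_eq N D (D `\` N)) // -?Rintegral_cst //; last by move=> w Nw; split=> [Dw|[]//].
apply: le_Rintegral => //.
- exact: integrableS measurableT mDN (@subsetT _ _) intf.
- exact: finite_measure_integrable_cst.
- by move=> w [Dw Nw]; apply: H.
Qed.

Lemma ae_null (Pr : Omega -> Prop) : {ae P, forall w, Pr w} ->
  exists N, [/\ measurable N, P N = 0%E & forall w, ~ N w -> Pr w].
Proof.
move=> [N [mN PN sN]]; exists N; split => // w Nw.
by apply: contrapT => H; apply: Nw; apply: sN.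
Qed.

Lemma ind_int (I : set Omega) (f g : Omega -> R) : measurable I ->
  measurable_fun setT f -> measurable_fun setT g ->
  (\int[P]_(w in I) (((f w <= g w)%R)%:R)%:E)%E = P (I `&` [set w | f w <= g w]).
Proof.
move=> mI mf mg; rewrite setIC -integral_indic //; last exact: mset_leO.
apply: eq_integral => w _; rewrite indicE.
have -> : (w \in [set w | f w <= g w]) = (f w <= g w).
  by apply/idP/idP => [/set_mem //|H]; apply: mem_set.
by [].
Qed.

Lemma Rint_ind (I : set Omega) (f g Y : Omega -> R) : measurable I ->
  measurable_fun setT f -> measurable_fun setT g ->
  \int[P]_(w in I) (((f w <= g w)%R)%:R * Y w) = \int[P]_(w in I `&` [set w | f w <= g w]) Y w.
Proof.
move=> mI mf mg; rewrite Rintegral_mkcondr; apply: eq_Rintegral => w _.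
rewrite patchE.
have -> : (w \in [set w | f w <= g w]) = (f w <= g w).
  by apply/idP/idP => [/set_mem //|H]; apply: mem_set.
by case: (f w <= g w); rewrite ?mul1r ?mul0r.
Qed.
End Gen.
Section Gen2.
Context (R : realType) (d : measure_display) (Omega : measurableType d)
  (P : probability Omega R) (dT : measure_display) (T : measurableType dT)
  (G : Omega -> T) (mG : measurable_fun setT G) (E : set Omega) (mE : measurable E)
  (a : T -> R) (ma : measurable_fun setT a)
  (ia : P.-integrable setT (EFin \o (a \o G))).

Lemma a_ge0
  (H1 : forall A, measurable A ->
     P (G @^-1` A `&` E) = (\int[P]_(w in G @^-1` A) (a (G w))%:E)%E) :
  {ae P, forall w, 0 <= a (G w)}.
Proof.
have mc : forall c : R, measurable_fun setT (fun _ : T => c) by move=> c; exact: measurable_cst.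
have mS : forall n : nat, measurable [set t | a t <= - (n.+1%:R : R)^-1].
  by move=> n; apply: mset_le.
have NF : P.-negligible (\bigcup_n (G @^-1` [set t | a t <= - (n.+1%:R : R)^-1])).
  apply: negligible_bigcup => n.
  exists (G @^-1` [set t | a t <= - (n.+1%:R : R)^-1]); split => //.
    by rewrite -[X in measurable X]setTI; apply: mG.
  apply: (@piece_null R d Omega P dT T G mG E mE a (fun=> 0) (fun=> 0) ia _ _ _ (mS n) (-1) (n.+1%:R^-1)).
  - exact: finite_measure_integrable_cst.
  - exact: finite_measure_integrable_cst.
  - by rewrite invr_gt0.
  - exact: H1.
  - rewrite !Rintegral_cst ?mul0r //.
      by rewrite -[X in measurable X]setTI; apply: mG.
    apply: measurableI => //.
    by rewrite -[X in measurable X]setTI; apply: mG.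
  - move=> t /= h; split; first by rewrite lerN10.
    set x := (n.+1%:R : R)^-1 in h *; lra.
apply: (negligibleS _ NF) => w /= Hw.
have a0 : a (G w) < 0 by rewrite ltNge; apply/negP.
set n := Num.Def.archi_bound (- a (G w))^-1.
exists n => //=.
have h0 : 0 <= (- a (G w))^-1 by rewrite invr_ge0 lerNr oppr0 ltW.
have h1 := archi_boundP h0.
have h2 : (- a (G w))^-1 < n.+1%:R by apply: (lt_le_trans h1); rewrite ler_nat.
move: h2; rewrite invf_plt ?posrE ?oppr_gt0 // => h2.
set x := (n.+1%:R : R)^-1 in h2 *; lra.
Qed.

Lemma supp_lo (Y : Omega -> R) : measurable_fun setT Y ->
  (-oo < ereal_inf (EFin @` rv_support P Y))%E ->
  {ae P, forall w, fine (ereal_inf (EFin @` rv_support P Y)) <= Y w}.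
Proof.
move=> mY lo; have [N [mN PN sN]] := @ae_supp _ _ _ P Y mY.
exists N; split => // w /= ng; apply: sN => /= Hw; apply: ng.
have le : (ereal_inf (EFin @` rv_support P Y) <= (Y w)%:E)%E.
  by apply: ereal_inf_lbound; exists (Y w).
have fin : ereal_inf (EFin @` rv_support P Y) \is a fin_num.
  have h1 : (ereal_inf (EFin @` rv_support P Y) < +oo)%E.
    by apply: le_lt_trans le _; rewrite ltry.
  by rewrite fin_numE (gt_eqF lo) (lt_eqF h1).
by rewrite -lee_fin fineK.
Qed.

Lemma supp_hi (Y : Omega -> R) : measurable_fun setT Y ->
  (ereal_sup (EFin @` rv_support P Y) < +oo)%E ->
  {ae P, forall w, Y w <= fine (ereal_sup (EFin @` rv_support P Y))}.
Proof.
move=> mY hi; have [N [mN PN sN]] := @ae_supp _ _ _ P Y mY.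
exists N; split => // w /= ng; apply: sN => /= Hw; apply: ng.
have le : ((Y w)%:E <= ereal_sup (EFin @` rv_support P Y))%E.
  by apply: ereal_sup_ubound; exists (Y w).
have fin : ereal_sup (EFin @` rv_support P Y) \is a fin_num.
  have h1 : (-oo < ereal_sup (EFin @` rv_support P Y))%E.
    by apply: lt_le_trans le; rewrite ltNyr.
  by rewrite fin_numE (gt_eqF h1) (lt_eqF hi).
by rewrite -lee_fin fineK.
Qed.
End Gen2.

Section AeComb.
Context (R : realType) (d : measure_display) (Omega : measurableType d)
  (P : probability Omega R).
Lemma aeI (P1 P2 : Omega -> Prop) : {ae P, forall w, P1 w} -> {ae P, forall w, P2 w} ->
  {ae P, forall w, P1 w /\ P2 w}.
Proof.
move=> h1 h2; apply: (negligibleS _ (negligibleU h1 h2)) => w /= ng.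
have [p1|np1] := pselect (P1 w); last by left.
have [p2|np2] := pselect (P2 w); last by right.
by exfalso; apply: ng.
Qed.
Lemma aeS (P1 P2 : Omega -> Prop) : {ae P, forall w, P1 w} ->
  (forall w, P1 w -> P2 w) -> {ae P, forall w, P2 w}.
Proof.
move=> h1 H; apply: (negligibleS _ h1) => w /= ng p1; apply: ng; exact: H.
Qed.
End AeComb.
Arguments aeS {R d Omega P P1 P2}.
Arguments aeI {R d Omega P P1 P2}.
Section Pt.
Context (R : realType).


Lemma le_div (s D K : R) : 0 < s -> s * D <= K -> D <= K / s.
Proof. by move=> s0 h; rewrite ler_pdivlMr // mulrC. Qed.
Lemma ge_div (s D K : R) : 0 < s -> s * (- D) <= - K -> K / s <= D.
Proof. by move=> s0 h; rewrite ler_pdivrMr // mulrC; lra. Qed.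

Lemma ptA1 (ylo yhi y0 y1 s0 s1 D : R) : 0 < s0 ->
  s0 * D <= 1 * y1 + -1 * y0 + - ylo * s1 + ylo * s0 ->
  s0 * (- D) <= 0 * y1 + 1 * y0 + 0 * s1 + - ylo * s0 ->
  Delta_lo ylo yhi y0 y1 s0 s1 A7_1 <= D <= Delta_hi ylo yhi y0 y1 s0 s1 A7_1.
Proof.
move=> sp U L; have s0n : s0 != 0 by rewrite gt_eqF.
rewrite /Delta_lo /Delta_hi; apply/andP; split.
  have -> : ylo - y0 / s0 = (ylo * s0 - y0) / s0 by field.
  by apply: ge_div => //; lra.
have -> : (y1 - ylo * (s1 - s0)) / s0 - y0 / s0 = (y1 - ylo * (s1 - s0) - y0) / s0 by field.
by apply: le_div => //; rewrite mulrBr; lra.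
Qed.

Lemma ptA2 (ylo yhi y0 y1 s0 s1 D : R) : 0 < s0 ->
  s0 * D <= 0 * y1 + -1 * y0 + 0 * s1 + yhi * s0 ->
  s0 * (- D) <= -1 * y1 + 1 * y0 + yhi * s1 + - yhi * s0 ->
  Delta_lo ylo yhi y0 y1 s0 s1 A7_2 <= D <= Delta_hi ylo yhi y0 y1 s0 s1 A7_2.
Proof.
move=> sp U L; have s0n : s0 != 0 by rewrite gt_eqF.
rewrite /Delta_lo /Delta_hi; apply/andP; split.
  have -> : (y1 - yhi * (s1 - s0)) / s0 - y0 / s0 = (y1 - yhi * (s1 - s0) - y0) / s0 by field.
  by apply: ge_div => //; rewrite mulrBr; lra.
have -> : yhi - y0 / s0 = (yhi * s0 - y0) / s0 by field.
by apply: le_div => //; lra.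
Qed.

Lemma ptA3 (ylo yhi y0 y1 s0 s1 D : R) : 0 < s0 ->
  s0 * D <= 1 * y1 + -1 * y0 + - ylo * s1 + ylo * s0 ->
  s0 * (- D) <= 0 * y1 + 1 * y0 + 0 * s1 + - ylo * s0 ->
  s0 * D <= 0 * y1 + -1 * y0 + 0 * s1 + yhi * s0 ->
  s0 * (- D) <= -1 * y1 + 1 * y0 + yhi * s1 + - yhi * s0 ->
  Delta_lo ylo yhi y0 y1 s0 s1 A7_3 <= D <= Delta_hi ylo yhi y0 y1 s0 s1 A7_3.
Proof.
move=> sp U1 L1 U2 L2.
have /andP[l1 h1] := ptA1 ylo yhi _ _ _ _ _ sp U1 L1.
have /andP[l2 h2] := ptA2 ylo yhi _ _ _ _ _ sp U2 L2.
move: l1 h1 l2 h2; rewrite /Delta_lo /Delta_hi => l1 h1 l2 h2.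
apply/andP; split.
  have : Num.max ((y1 - yhi * (s1 - s0)) / s0) ylo <= D + y0 / s0.
    by rewrite ge_max; apply/andP; split; lra.
  lra.
have : D + y0 / s0 <= Num.min ((y1 - ylo * (s1 - s0)) / s0) yhi.
  by rewrite le_min; apply/andP; split; lra.
lra.
Qed.

Lemma ptB1 (ylo yhi y0 y1 s0 s1 D : R) : 0 < s1 ->
  s1 * D <= 1 * y1 + 0 * y0 + - ylo * s1 + 0 * s0 ->
  s1 * (- D) <= -1 * y1 + 1 * y0 + ylo * s1 + - ylo * s0 ->
  Lambda_lo ylo yhi y0 y1 s0 s1 A7_1 <= D <= Lambda_hi ylo yhi y0 y1 s0 s1 A7_1.
Proof.
move=> sp U L; have s1n : s1 != 0 by rewrite gt_eqF.
rewrite /Lambda_lo /Lambda_hi; apply/andP; split.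
  have -> : y1 / s1 - (y0 - ylo * - (s1 - s0)) / s1 = (y1 - (y0 - ylo * - (s1 - s0))) / s1 by field.
  by apply: ge_div => //; lra.
have -> : y1 / s1 - ylo = (y1 - ylo * s1) / s1 by field.
by apply: le_div => //; lra.
Qed.

Lemma ptB2 (ylo yhi y0 y1 s0 s1 D : R) : 0 < s1 ->
  s1 * D <= 1 * y1 + -1 * y0 + - yhi * s1 + yhi * s0 ->
  s1 * (- D) <= -1 * y1 + 0 * y0 + yhi * s1 + 0 * s0 ->
  Lambda_lo ylo yhi y0 y1 s0 s1 A7_2 <= D <= Lambda_hi ylo yhi y0 y1 s0 s1 A7_2.
Proof.
move=> sp U L; have s1n : s1 != 0 by rewrite gt_eqF.
rewrite /Lambda_lo /Lambda_hi; apply/andP; split.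
  have -> : y1 / s1 - yhi = (y1 - yhi * s1) / s1 by field.
  by apply: ge_div => //; lra.
have -> : y1 / s1 - (y0 - yhi * - (s1 - s0)) / s1 = (y1 - (y0 - yhi * - (s1 - s0))) / s1 by field.
by apply: le_div => //; lra.
Qed.

Lemma ptB3 (ylo yhi y0 y1 s0 s1 D : R) : 0 < s1 ->
  s1 * D <= 1 * y1 + 0 * y0 + - ylo * s1 + 0 * s0 ->
  s1 * (- D) <= -1 * y1 + 1 * y0 + ylo * s1 + - ylo * s0 ->
  s1 * D <= 1 * y1 + -1 * y0 + - yhi * s1 + yhi * s0 ->
  s1 * (- D) <= -1 * y1 + 0 * y0 + yhi * s1 + 0 * s0 ->
  Lambda_lo ylo yhi y0 y1 s0 s1 A7_3 <= D <= Lambda_hi ylo yhi y0 y1 s0 s1 A7_3.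
Proof.
move=> sp U1 L1 U2 L2.
have /andP[l1 h1] := ptB1 ylo yhi _ _ _ _ _ sp U1 L1.
have /andP[l2 h2] := ptB2 ylo yhi _ _ _ _ _ sp U2 L2.
move: l1 h1 l2 h2; rewrite /Lambda_lo /Lambda_hi => l1 h1 l2 h2.
apply/andP; split.
  have : y1 / s1 - D <= Num.min ((y0 - ylo * - (s1 - s0)) / s1) yhi.
    by rewrite le_min; apply/andP; split; lra.
  lra.
have : Num.max ((y0 - yhi * - (s1 - s0)) / s1) ylo <= y1 / s1 - D.
  by rewrite ge_max; apply/andP; split; lra.
lra.
Qed.
End Pt.
Section App.
Context (R : realType) (d : measure_display) (Omega : measurableType d)
  (P : probability Omega R)
  (dX : measure_display) (TX : measurableType dX)
  (X : Omega -> TX) (U V Y0s Y1s : Omega -> R) (Q : bool -> TX -> R)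
  (mX : measurable_fun setT X) (mU : measurable_fun setT U)
  (mV : measurable_fun setT V)
  (mY0 : measurable_fun setT Y0s) (mY1 : measurable_fun setT Y1s)
  (mQ : forall b, measurable_fun setT (Q b))
  (A30 : P.-integrable setT (EFin \o Y0s))
  (A31 : P.-integrable setT (EFin \o Y1s))
  (m0Y m1Y m0S m1S DOO : TX * R -> R)
  (hm0Y : is_condexp P (fun w => (X w, U w))
            (fun w => ((V w <= Q false (X w))%R)%:R * Y0s w) m0Y)
  (hm1Y : is_condexp P (fun w => (X w, U w))
            (fun w => ((V w <= Q true (X w))%R)%:R * Y1s w) m1Y)
  (hm0S : is_condexp P (fun w => (X w, U w))
            (fun w => ((V w <= Q false (X w))%R)%:R) m0S)
  (hm1S : is_condexp P (fun w => (X w, U w))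
            (fun w => ((V w <= Q true (X w))%R)%:R) m1S)
  (hDOO : is_condexp_on P (fun w => (X w, U w))
            [set w | V w <= Q false (X w) /\ V w <= Q true (X w)]
            (fun w => Y1s w - Y0s w) DOO).

Let G := fun w => (X w, U w).
Let mG : measurable_fun setT G := measurable_fun_pair mX mU.
Let mQX b : measurable_fun setT (fun w => Q b (X w)) := measurableT_comp (mQ b) mX.
Let S b := [set w | V w <= Q b (X w)].
Let mS b : measurable (S b) := @mset_leO R d Omega V (fun w => Q b (X w)) mV (mQX b).
Let E := S false `&` S true.
Let mE : measurable E := measurableI _ _ (mS false) (mS true).
Let mI A : measurable A -> measurable (G @^-1` A).
Proof. by move=> mA; rewrite -[X in measurable X]setTI; apply: mG. Qed.

Let m0Ym := hm0Y.1.  Let m1Ym := hm1Y.1.  Let m0Sm := hm0S.1.  Let m1Sm := hm1S.1.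
Let DOOm := hDOO.1.
Let m0Yi := hm0Y.2.1.  Let m1Yi := hm1Y.2.1.  Let m0Si := hm0S.2.1.  Let m1Si := hm1S.2.1.
Let DOOi := hDOO.2.1.

Let intS (D : set Omega) (f : Omega -> R) : measurable D ->
  P.-integrable setT (EFin \o f) -> P.-integrable D (EFin \o f).
Proof. by move=> mD i; exact: integrableS measurableT mD (@subsetT _ _) i. Qed.

Lemma FS0 A : measurable A ->
  P (G @^-1` A `&` S false) = (\int[P]_(w in G @^-1` A) (m0S (G w))%:E)%E.
Proof.
move=> mA; have := hm0S.2.2 A mA.
by rewrite (@ind_int _ _ _ P _ V (fun w => Q false (X w)) (mI _ mA) mV (mQX false)).
Qed.
Lemma FS1 A : measurable A ->
  P (G @^-1` A `&` S true) = (\int[P]_(w in G @^-1` A) (m1S (G w))%:E)%E.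
Proof.
move=> mA; have := hm1S.2.2 A mA.
by rewrite (@ind_int _ _ _ P _ V (fun w => Q true (X w)) (mI _ mA) mV (mQX true)).
Qed.
Lemma FY0 A : measurable A ->
  \int[P]_(w in G @^-1` A `&` S false) Y0s w = \int[P]_(w in G @^-1` A) m0Y (G w).
Proof.
move=> mA; have e := hm0Y.2.2 A mA.
rewrite -(@Rint_ind _ _ _ P _ V (fun w => Q false (X w)) Y0s (mI _ mA) mV (mQX false)).
by rewrite /Rintegral e.
Qed.
Lemma FY1 A : measurable A ->
  \int[P]_(w in G @^-1` A `&` S true) Y1s w = \int[P]_(w in G @^-1` A) m1Y (G w).
Proof.
move=> mA; have e := hm1Y.2.2 A mA.
rewrite -(@Rint_ind _ _ _ P _ V (fun w => Q true (X w)) Y1s (mI _ mA) mV (mQX true)).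
by rewrite /Rintegral e.
Qed.
Lemma FD A : measurable A ->
  \int[P]_(w in G @^-1` A `&` E) DOO (G w) =
  \int[P]_(w in G @^-1` A `&` E) Y1s w - \int[P]_(w in G @^-1` A `&` E) Y0s w.
Proof.
move=> mA; have e := hDOO.2.2 A mA.
have mIE : measurable (G @^-1` A `&` E) := measurableI _ _ (mI _ mA) mE.
rewrite -RintegralB //; try exact: intS.
by rewrite /Rintegral -e.
Qed.

Lemma Rint_opp (D : set Omega) (f : Omega -> R) : measurable D ->
  P.-integrable D (EFin \o f) ->
  \int[P]_(w in D) (- f w) = - \int[P]_(w in D) f w.
Proof.
move=> mD i; rewrite -mulN1r -(@RintegralZl _ _ _ P D f) //.
by apply: eq_Rintegral => w _; rewrite mulN1r.
Qed.

Definition kc (c1 c2 c3 c4 : R) (t : TX * R) :=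
  c1 * m1Y t + c2 * m0Y t + c3 * m1S t + c4 * m0S t.

Lemma kc_m c1 c2 c3 c4 : measurable_fun setT (kc c1 c2 c3 c4).
Proof.
have mc : forall c : R, measurable_fun setT (fun _ : TX * R => c) by move=> c; exact: measurable_cst.
rewrite /kc; apply: measurable_realfun.measurable_funD;
  [apply: measurable_realfun.measurable_funD;
   [apply: measurable_realfun.measurable_funD|]|];
  exact: measurable_realfun.measurable_funM.
Qed.

Lemma kc_i c1 c2 c3 c4 : P.-integrable setT (EFin \o (kc c1 c2 c3 c4 \o G)).
Proof.
rewrite /kc /comp.
apply: (@intRD _ _ _ P _ (fun w => c1 * m1Y (G w) + c2 * m0Y (G w) + c3 * m1S (G w))
   (fun w => c4 * m0S (G w))) => //.
  apply: (@intRD _ _ _ P _ (fun w => c1 * m1Y (G w) + c2 * m0Y (G w))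
   (fun w => c3 * m1S (G w))) => //.
    apply: (@intRD _ _ _ P _ (fun w => c1 * m1Y (G w)) (fun w => c2 * m0Y (G w))) => //.
      exact: (@intRZ _ _ _ P _ c1 (m1Y \o G)).
    exact: (@intRZ _ _ _ P _ c2 (m0Y \o G)).
  exact: (@intRZ _ _ _ P _ c3 (m1S \o G)).
exact: (@intRZ _ _ _ P _ c4 (m0S \o G)).
Qed.

Lemma kc_R c1 c2 c3 c4 (I : set Omega) : measurable I ->
  \int[P]_(w in I) kc c1 c2 c3 c4 (G w) =
  c1 * \int[P]_(w in I) m1Y (G w) + c2 * \int[P]_(w in I) m0Y (G w) +
  c3 * \int[P]_(w in I) m1S (G w) + c4 * \int[P]_(w in I) m0S (G w).
Proof.
move=> mI'.
have i1 : P.-integrable I (EFin \o (m1Y \o G)) by exact: intS.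
have i2 : P.-integrable I (EFin \o (m0Y \o G)) by exact: intS.
have i3 : P.-integrable I (EFin \o (m1S \o G)) by exact: intS.
have i4 : P.-integrable I (EFin \o (m0S \o G)) by exact: intS.
rewrite /kc.
rewrite (@RintegralD _ _ _ P I (fun w => c1 * m1Y (G w) + c2 * m0Y (G w) + c3 * m1S (G w))
   (fun w => c4 * m0S (G w))) //; last first.
  exact: (@intRZ _ _ _ P _ c4 (m0S \o G)).
  apply: (@intRD _ _ _ P _ (fun w => c1 * m1Y (G w) + c2 * m0Y (G w))
   (fun w => c3 * m1S (G w))) => //.
    apply: (@intRD _ _ _ P _ (fun w => c1 * m1Y (G w)) (fun w => c2 * m0Y (G w))) => //.
      exact: (@intRZ _ _ _ P _ c1 (m1Y \o G)).
    exact: (@intRZ _ _ _ P _ c2 (m0Y \o G)).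
  exact: (@intRZ _ _ _ P _ c3 (m1S \o G)).
rewrite (@RintegralD _ _ _ P I (fun w => c1 * m1Y (G w) + c2 * m0Y (G w))
   (fun w => c3 * m1S (G w))) //; last first.
  exact: (@intRZ _ _ _ P _ c3 (m1S \o G)).
  apply: (@intRD _ _ _ P _ (fun w => c1 * m1Y (G w)) (fun w => c2 * m0Y (G w))) => //.
    exact: (@intRZ _ _ _ P _ c1 (m1Y \o G)).
  exact: (@intRZ _ _ _ P _ c2 (m0Y \o G)).
rewrite (@RintegralD _ _ _ P I (fun w => c1 * m1Y (G w)) (fun w => c2 * m0Y (G w))) //; last first.
  exact: (@intRZ _ _ _ P _ c2 (m0Y \o G)).
  exact: (@intRZ _ _ _ P _ c1 (m1Y \o G)).
rewrite (@RintegralZl _ _ _ P I (m1Y \o G)) // (@RintegralZl _ _ _ P I (m0Y \o G)) //.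
by rewrite (@RintegralZl _ _ _ P I (m1S \o G)) // (@RintegralZl _ _ _ P I (m0S \o G)).
Qed.

Lemma dirA_facts (N : set Omega) (mN : measurable N) (PN : P N = 0%E)
  (HN : forall w, ~ N w -> Q false (X w) < Q true (X w))
  (A : set (TX * R)) (mA : measurable A) :
  [/\ P (G @^-1` A `&` E) = (\int[P]_(w in G @^-1` A) (m0S (G w))%:E)%E,
      fine (P (G @^-1` A `&` E)) = \int[P]_(w in G @^-1` A) m0S (G w),
      \int[P]_(w in G @^-1` A) m1S (G w) =
        fine (P (G @^-1` A `&` E)) + fine (P (G @^-1` A `&` (S true `\` S false))),
      \int[P]_(w in G @^-1` A) m1Y (G w) =
        \int[P]_(w in G @^-1` A `&` E) Y1s w +
        \int[P]_(w in G @^-1` A `&` (S true `\` S false)) Y1s w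
    & \int[P]_(w in G @^-1` A `&` E) DOO (G w) =
      \int[P]_(w in G @^-1` A `&` E) Y1s w - \int[P]_(w in G @^-1` A) m0Y (G w)].
Proof.
have mII := mI _ mA.
have mIE : measurable (G @^-1` A `&` E) := measurableI _ _ mII mE.
have mIS : forall b, measurable (G @^-1` A `&` S b) by move=> b; exact: measurableI.
have mRr : measurable (G @^-1` A `&` (S true `\` S false)).
  by apply: measurableI => //; exact: measurableD.
have eqE : forall w, ~ N w -> ((G @^-1` A `&` E) w <-> (G @^-1` A `&` S false) w).
  move=> w Nw; split => [[Iw [S0w _]]|[Iw S0w]]; split => //; split => //.
  exact: le_trans S0w (ltW (HN w Nw)).
have fE : fine (P (G @^-1` A `&` E)) = fine (P (G @^-1` A `&` S false)).
  exact: (@Pnull_eq _ _ _ P N _ _ mN PN mIE (mIS false) eqE).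
have hsplit : G @^-1` A `&` S true =
    (G @^-1` A `&` E) `|` (G @^-1` A `&` (S true `\` S false)).
  apply/seteqP; split => w.
    move=> [Iw S1w]; have [S0w|nS0w] := pselect (S false w).
      by left.
    by right.
  by move=> [[Iw [_ S1w]]|[Iw [S1w _]]].
have hdisj : [disjoint G @^-1` A `&` E & G @^-1` A `&` (S true `\` S false)].
  by apply/disj_setPS => w [[_ [S0w _]] [_ [_ nS0w]]].
split.
- rewrite -FS0 // -(fineK (fin_num_measure P _ mIE)) fE fineK //.
  exact: fin_num_measure.
- by rewrite fE /Rintegral -FS0.
- have -> : \int[P]_(w in G @^-1` A) m1S (G w) = fine (P (G @^-1` A `&` S true)).
    by rewrite /Rintegral -FS1.
  rewrite hsplit !fine_P1 //; last exact: measurableU.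
  rewrite Rintegral_setU //.
  apply: finite_measure_integrable_cst; exact: measurableU.
- rewrite -FY1 // hsplit Rintegral_setU //.
  by apply: intS => //; exact: measurableU.
- rewrite FD // -FY0 //; congr (_ - _).
  exact: (@Rint_null _ _ _ P N _ _ Y0s mN PN mIE (mIS false) eqE A30).
Qed.

Lemma dirB_facts (N : set Omega) (mN : measurable N) (PN : P N = 0%E)
  (HN : forall w, ~ N w -> Q true (X w) < Q false (X w))
  (A : set (TX * R)) (mA : measurable A) :
  [/\ P (G @^-1` A `&` E) = (\int[P]_(w in G @^-1` A) (m1S (G w))%:E)%E,
      fine (P (G @^-1` A `&` E)) = \int[P]_(w in G @^-1` A) m1S (G w),
      \int[P]_(w in G @^-1` A) m0S (G w) =
        fine (P (G @^-1` A `&` E)) + fine (P (G @^-1` A `&` (S false `\` S true))),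
      \int[P]_(w in G @^-1` A) m0Y (G w) =
        \int[P]_(w in G @^-1` A `&` E) Y0s w +
        \int[P]_(w in G @^-1` A `&` (S false `\` S true)) Y0s w
    & \int[P]_(w in G @^-1` A `&` E) DOO (G w) =
      \int[P]_(w in G @^-1` A) m1Y (G w) - \int[P]_(w in G @^-1` A `&` E) Y0s w].
Proof.
have mII := mI _ mA.
have mIE : measurable (G @^-1` A `&` E) := measurableI _ _ mII mE.
have mIS : forall b, measurable (G @^-1` A `&` S b) by move=> b; exact: measurableI.
have mRr : measurable (G @^-1` A `&` (S false `\` S true)).
  by apply: measurableI => //; exact: measurableD.
have eqE : forall w, ~ N w -> ((G @^-1` A `&` E) w <-> (G @^-1` A `&` S true) w).
  move=> w Nw; split => [[Iw [_ S1w]]|[Iw S1w]]; split => //; split => //.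
  exact: le_trans S1w (ltW (HN w Nw)).
have fE : fine (P (G @^-1` A `&` E)) = fine (P (G @^-1` A `&` S true)).
  exact: (@Pnull_eq _ _ _ P N _ _ mN PN mIE (mIS true) eqE).
have hsplit : G @^-1` A `&` S false =
    (G @^-1` A `&` E) `|` (G @^-1` A `&` (S false `\` S true)).
  apply/seteqP; split => w.
    move=> [Iw S0w]; have [S1w|nS1w] := pselect (S true w).
      by left.
    by right.
  by move=> [[Iw [S0w _]]|[Iw [S0w _]]].
have hdisj : [disjoint G @^-1` A `&` E & G @^-1` A `&` (S false `\` S true)].
  by apply/disj_setPS => w [[_ [_ S1w]] [_ [_ nS1w]]].
split.
- rewrite -FS1 // -(fineK (fin_num_measure P _ mIE)) fE fineK //.
  exact: fin_num_measure.
- by rewrite fE /Rintegral -FS1.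
- have -> : \int[P]_(w in G @^-1` A) m0S (G w) = fine (P (G @^-1` A `&` S false)).
    by rewrite /Rintegral -FS0.
  rewrite hsplit !fine_P1 //; last exact: measurableU.
  rewrite Rintegral_setU //.
  apply: finite_measure_integrable_cst; exact: measurableU.
- rewrite -FY0 // hsplit Rintegral_setU //.
  by apply: intS => //; exact: measurableU.
- rewrite FD // -FY1 //; congr (_ - _).
  exact: (@Rint_null _ _ _ P N _ _ Y1s mN PN mIE (mIS true) eqE A31).
Qed.

Let mnD : measurable_fun setT (fun t => - DOO t).
Proof. exact: measurable_realfun.measurable_funN. Qed.
Let inD : P.-integrable E (EFin \o ((fun t => - DOO t) \o G)).
Proof. exact: (@intRN _ _ _ P E (DOO \o G)). Qed.
Let DOOIE A : measurable A -> P.-integrable (G @^-1` A `&` E) (EFin \o (DOO \o G)).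
Proof.
move=> mA; apply: integrableS mE _ _ DOOi => //; exact: measurableI (mI _ mA) mE.
Qed.
Let mIE A : measurable A -> measurable (G @^-1` A `&` E).
Proof. by move=> mA; exact: measurableI (mI _ mA) mE. Qed.
Let mRrA A : measurable A -> measurable (G @^-1` A `&` (S true `\` S false)).
Proof. by move=> mA; apply: measurableI; [exact: mI|exact: measurableD]. Qed.
Let mRrB A : measurable A -> measurable (G @^-1` A `&` (S false `\` S true)).
Proof. by move=> mA; apply: measurableI; [exact: mI|exact: measurableD]. Qed.

Lemma dirA_lo (N : set Omega) (mN : measurable N) (PN : P N = 0%E)
  (HN : forall w, ~ N w -> Q false (X w) < Q true (X w))
  (c : R) (Nc : set Omega) (mNc : measurable Nc) (PNc : P Nc = 0%E)
  (Hc : forall w, ~ Nc w -> c <= Y1s w) :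
  ({ae P, forall w, 0 <= m0S (G w) -> m0S (G w) * DOO (G w) <= kc 1 (-1) (-c) c (G w)}) /\
  ({ae P, forall w, 0 <= m0S (G w) -> m0S (G w) * (- DOO (G w)) <= kc 0 1 0 (-c) (G w)}).
Proof.
split.
  apply: (@main_ae R d Omega P _ _ G mG E mE m0S DOO (kc 1 (-1) (-c) c) m0Sm DOOm
    (kc_m _ _ _ _) m0Si (kc_i _ _ _ _) DOOi).
    by move=> A mA; case: (dirA_facts _ mN PN HN _ mA).
  move=> A mA; have [_ a2 a3 a4 a5] := dirA_facts _ mN PN HN _ mA.
  rewrite (kc_R _ _ _ _ _ (mI _ mA)).
  have e5 : \int[P]_(w in G @^-1` A `&` E) DOO (G w) = _ := a5.
  rewrite e5 -a2 a3.
  have b1 := @Rint_ge_null _ _ _ P _ _ Y1s c mNc PNc (mRrA _ mA) A31 (fun w nw _ => Hc w nw).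
  rewrite mulrDr; lra.
apply: (@main_ae R d Omega P _ _ G mG E mE m0S (fun t => - DOO t) (kc 0 1 0 (-c)) m0Sm mnD
    (kc_m _ _ _ _) m0Si (kc_i _ _ _ _) inD).
  by move=> A mA; case: (dirA_facts _ mN PN HN _ mA).
move=> A mA; have [_ a2 a3 a4 a5] := dirA_facts _ mN PN HN _ mA.
rewrite (@Rint_opp _ (DOO \o G) (mIE _ mA) (DOOIE _ mA)).
rewrite (kc_R _ _ _ _ _ (mI _ mA)).
  have e5 : \int[P]_(w in G @^-1` A `&` E) DOO (G w) = _ := a5.
  rewrite e5 -a2 a3.
have b1 := @Rint_ge_null _ _ _ P _ _ Y1s c mNc PNc (mIE _ mA) A31 (fun w nw _ => Hc w nw).
lra.
Qed.

Lemma dirA_hi (N : set Omega) (mN : measurable N) (PN : P N = 0%E)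
  (HN : forall w, ~ N w -> Q false (X w) < Q true (X w))
  (c : R) (Nc : set Omega) (mNc : measurable Nc) (PNc : P Nc = 0%E)
  (Hc : forall w, ~ Nc w -> Y1s w <= c) :
  ({ae P, forall w, 0 <= m0S (G w) -> m0S (G w) * DOO (G w) <= kc 0 (-1) 0 c (G w)}) /\
  ({ae P, forall w, 0 <= m0S (G w) -> m0S (G w) * (- DOO (G w)) <= kc (-1) 1 c (-c) (G w)}).
Proof.
split.
  apply: (@main_ae R d Omega P _ _ G mG E mE m0S DOO (kc 0 (-1) 0 c) m0Sm DOOm
    (kc_m _ _ _ _) m0Si (kc_i _ _ _ _) DOOi).
    by move=> A mA; case: (dirA_facts _ mN PN HN _ mA).
  move=> A mA; have [_ a2 a3 a4 a5] := dirA_facts _ mN PN HN _ mA.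
  rewrite (kc_R _ _ _ _ _ (mI _ mA)).
  have e5 : \int[P]_(w in G @^-1` A `&` E) DOO (G w) = _ := a5.
  rewrite e5 -a2 a3.
  have b1 := @Rint_le_null _ _ _ P _ _ Y1s c mNc PNc (mIE _ mA) A31 (fun w nw _ => Hc w nw).
  lra.
apply: (@main_ae R d Omega P _ _ G mG E mE m0S (fun t => - DOO t) (kc (-1) 1 c (-c)) m0Sm mnD
    (kc_m _ _ _ _) m0Si (kc_i _ _ _ _) inD).
  by move=> A mA; case: (dirA_facts _ mN PN HN _ mA).
move=> A mA; have [_ a2 a3 a4 a5] := dirA_facts _ mN PN HN _ mA.
rewrite (@Rint_opp _ (DOO \o G) (mIE _ mA) (DOOIE _ mA)).
rewrite (kc_R _ _ _ _ _ (mI _ mA)).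
  have e5 : \int[P]_(w in G @^-1` A `&` E) DOO (G w) = _ := a5.
  rewrite e5 -a2 a3.
have b1 := @Rint_le_null _ _ _ P _ _ Y1s c mNc PNc (mRrA _ mA) A31 (fun w nw _ => Hc w nw).
rewrite mulrDr; lra.
Qed.

Lemma dirB_lo (N : set Omega) (mN : measurable N) (PN : P N = 0%E)
  (HN : forall w, ~ N w -> Q true (X w) < Q false (X w))
  (c : R) (Nc : set Omega) (mNc : measurable Nc) (PNc : P Nc = 0%E)
  (Hc : forall w, ~ Nc w -> c <= Y0s w) :
  ({ae P, forall w, 0 <= m1S (G w) -> m1S (G w) * DOO (G w) <= kc 1 0 (-c) 0 (G w)}) /\
  ({ae P, forall w, 0 <= m1S (G w) -> m1S (G w) * (- DOO (G w)) <= kc (-1) 1 c (-c) (G w)}).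
Proof.
split.
  apply: (@main_ae R d Omega P _ _ G mG E mE m1S DOO (kc 1 0 (-c) 0) m1Sm DOOm
    (kc_m _ _ _ _) m1Si (kc_i _ _ _ _) DOOi).
    by move=> A mA; case: (dirB_facts _ mN PN HN _ mA).
  move=> A mA; have [_ a2 a3 a4 a5] := dirB_facts _ mN PN HN _ mA.
  rewrite (kc_R _ _ _ _ _ (mI _ mA)).
  have e5 : \int[P]_(w in G @^-1` A `&` E) DOO (G w) = _ := a5.
  rewrite e5 -a2 a3.
  have b1 := @Rint_ge_null _ _ _ P _ _ Y0s c mNc PNc (mIE _ mA) A30 (fun w nw _ => Hc w nw).
  lra.
apply: (@main_ae R d Omega P _ _ G mG E mE m1S (fun t => - DOO t) (kc (-1) 1 c (-c)) m1Sm mnD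
    (kc_m _ _ _ _) m1Si (kc_i _ _ _ _) inD).
  by move=> A mA; case: (dirB_facts _ mN PN HN _ mA).
move=> A mA; have [_ a2 a3 a4 a5] := dirB_facts _ mN PN HN _ mA.
rewrite (@Rint_opp _ (DOO \o G) (mIE _ mA) (DOOIE _ mA)).
rewrite (kc_R _ _ _ _ _ (mI _ mA)).
  have e5 : \int[P]_(w in G @^-1` A `&` E) DOO (G w) = _ := a5.
  rewrite e5 -a2 a3.
have b1 := @Rint_ge_null _ _ _ P _ _ Y0s c mNc PNc (mRrB _ mA) A30 (fun w nw _ => Hc w nw).
rewrite mulrDr; lra.
Qed.

Lemma dirB_hi (N : set Omega) (mN : measurable N) (PN : P N = 0%E)
  (HN : forall w, ~ N w -> Q true (X w) < Q false (X w))
  (c : R) (Nc : set Omega) (mNc : measurable Nc) (PNc : P Nc = 0%E)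
  (Hc : forall w, ~ Nc w -> Y0s w <= c) :
  ({ae P, forall w, 0 <= m1S (G w) -> m1S (G w) * DOO (G w) <= kc 1 (-1) (-c) c (G w)}) /\
  ({ae P, forall w, 0 <= m1S (G w) -> m1S (G w) * (- DOO (G w)) <= kc (-1) 0 c 0 (G w)}).
Proof.
split.
  apply: (@main_ae R d Omega P _ _ G mG E mE m1S DOO (kc 1 (-1) (-c) c) m1Sm DOOm
    (kc_m _ _ _ _) m1Si (kc_i _ _ _ _) DOOi).
    by move=> A mA; case: (dirB_facts _ mN PN HN _ mA).
  move=> A mA; have [_ a2 a3 a4 a5] := dirB_facts _ mN PN HN _ mA.
  rewrite (kc_R _ _ _ _ _ (mI _ mA)).
  have e5 : \int[P]_(w in G @^-1` A `&` E) DOO (G w) = _ := a5.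
  rewrite e5 -a2 a3.
  have b1 := @Rint_le_null _ _ _ P _ _ Y0s c mNc PNc (mRrB _ mA) A30 (fun w nw _ => Hc w nw).
  rewrite mulrDr; lra.
apply: (@main_ae R d Omega P _ _ G mG E mE m1S (fun t => - DOO t) (kc (-1) 0 c 0) m1Sm mnD
    (kc_m _ _ _ _) m1Si (kc_i _ _ _ _) inD).
  by move=> A mA; case: (dirB_facts _ mN PN HN _ mA).
move=> A mA; have [_ a2 a3 a4 a5] := dirB_facts _ mN PN HN _ mA.
rewrite (@Rint_opp _ (DOO \o G) (mIE _ mA) (DOOIE _ mA)).
rewrite (kc_R _ _ _ _ _ (mI _ mA)).
  have e5 : \int[P]_(w in G @^-1` A `&` E) DOO (G w) = _ := a5.
  rewrite e5 -a2 a3.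
have b1 := @Rint_le_null _ _ _ P _ _ Y0s c mNc PNc (mIE _ mA) A30 (fun w nw _ => Hc w nw).
lra.
Qed.

Lemma final_ae (c : supp_case) (A6 : rv_support P Y0s = rv_support P Y1s)
  (A7 : support_case c (rv_support P Y0s))
  (A8 : {ae P, forall w, 0 < Q false (X w) < Q true (X w)} \/
        {ae P, forall w, 0 < Q true (X w) < Q false (X w)}) :
  let ylo := fine (ereal_inf (EFin @` rv_support P Y0s)) in
  let yhi := fine (ereal_sup (EFin @` rv_support P Y0s)) in
  {ae P, forall w,
    let xu := (X w, U w) in
    m0S xu != 0 -> m1S xu != 0 ->
    Num.min (Delta_lo ylo yhi (m0Y xu) (m1Y xu) (m0S xu) (m1S xu) c)
            (Lambda_lo ylo yhi (m0Y xu) (m1Y xu) (m0S xu) (m1S xu) c)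
    <= DOO xu <=
    Num.max (Delta_hi ylo yhi (m0Y xu) (m1Y xu) (m0S xu) (m1S xu) c)
            (Lambda_hi ylo yhi (m0Y xu) (m1Y xu) (m0S xu) (m1S xu) c)}.
Proof.
move=> ylo yhi.
have lo0 : (-oo < ereal_inf (EFin @` rv_support P Y0s))%E ->
    exists Nc, [/\ measurable Nc, P Nc = 0%E & forall w, ~ Nc w -> ylo <= Y0s w].
  by move=> h; apply: ae_null; exact: (@supp_lo _ _ _ P Y0s mY0 h).
have lo1 : (-oo < ereal_inf (EFin @` rv_support P Y0s))%E ->
    exists Nc, [/\ measurable Nc, P Nc = 0%E & forall w, ~ Nc w -> ylo <= Y1s w].
  move=> h; apply: ae_null; rewrite /ylo A6; apply: (@supp_lo _ _ _ P Y1s mY1).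
  by rewrite -A6.
have hi0 : (ereal_sup (EFin @` rv_support P Y0s) < +oo)%E ->
    exists Nc, [/\ measurable Nc, P Nc = 0%E & forall w, ~ Nc w -> Y0s w <= yhi].
  by move=> h; apply: ae_null; exact: (@supp_hi _ _ _ P Y0s mY0 h).
have hi1 : (ereal_sup (EFin @` rv_support P Y0s) < +oo)%E ->
    exists Nc, [/\ measurable Nc, P Nc = 0%E & forall w, ~ Nc w -> Y1s w <= yhi].
  move=> h; apply: ae_null; rewrite /yhi A6; apply: (@supp_hi _ _ _ P Y1s mY1).
  by rewrite -A6.
have [lo hi] : ((-oo < ereal_inf (EFin @` rv_support P Y0s))%E \/ c = A7_2) /\
               ((ereal_sup (EFin @` rv_support P Y0s) < +oo)%E \/ c = A7_1).
  case: c A7 => /= A7; split; try by right.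
  - by left; case: A7.
  - by left; case: A7 => _ [].
  - by left; case: A7 => f _; move: f; rewrite fin_numE => /andP[f _]; rewrite ltNye.
  - by left; case: A7 => _ [f _]; move: f; rewrite fin_numE => /andP[_ f]; rewrite ltey.
case: A8 => A8.
- have [N [mN PN HN0]] := @ae_null _ _ _ P _ A8.
  have HN : forall w, ~ N w -> Q false (X w) < Q true (X w).
    by move=> w /HN0 /andP[].
  have H1A : forall A, measurable A ->
      P (G @^-1` A `&` E) = (\int[P]_(w in G @^-1` A) (m0S (G w))%:E)%E.
    by move=> A mA; case: (dirA_facts _ mN PN HN _ mA).
  have ae0 := @a_ge0 R d Omega P _ _ G mG E mE m0S m0Sm m0Si H1A.
  case: c A7 lo hi => A7 lo hi.
  + case: lo => // /lo1 [Nc [mNc PNc Hc]].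
    have [Ub Lb] := dirA_lo _ mN PN HN _ _ mNc PNc Hc.
    refine (aeS (aeI (aeI ae0 Ub) Lb) _) => w [[a0 u] l] /= h0 h1.
    have sp : 0 < m0S (G w) by rewrite lt0r h0 a0.
    have /andP[ll hh] := @ptA1 R ylo yhi _ _ _ _ _ sp (u a0) (l a0).
    by rewrite ge_min le_max ll hh.
  + case: hi => // /hi1 [Nc [mNc PNc Hc]].
    have [Ub Lb] := dirA_hi _ mN PN HN _ _ mNc PNc Hc.
    refine (aeS (aeI (aeI ae0 Ub) Lb) _) => w [[a0 u] l] /= h0 h1.
    have sp : 0 < m0S (G w) by rewrite lt0r h0 a0.
    have /andP[ll hh] := @ptA2 R ylo yhi _ _ _ _ _ sp (u a0) (l a0).
    by rewrite ge_min le_max ll hh.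
  + case: lo => // /lo1 [Nc [mNc PNc Hc]].
    case: hi => // /hi1 [Nc' [mNc' PNc' Hc']].
    have [Ub Lb] := dirA_lo _ mN PN HN _ _ mNc PNc Hc.
    have [Ub' Lb'] := dirA_hi _ mN PN HN _ _ mNc' PNc' Hc'.
    refine (aeS (aeI (aeI (aeI (aeI ae0 Ub) Lb) Ub') Lb') _) => w [[[[a0 u] l] u'] l'] /= h0 h1.
    have sp : 0 < m0S (G w) by rewrite lt0r h0 a0.
    have /andP[ll hh] := @ptA3 R ylo yhi _ _ _ _ _ sp (u a0) (l a0) (u' a0) (l' a0).
    by rewrite ge_min le_max ll hh.
- have [N [mN PN HN0]] := @ae_null _ _ _ P _ A8.
  have HN : forall w, ~ N w -> Q true (X w) < Q false (X w).
    by move=> w /HN0 /andP[].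
  have H1B : forall A, measurable A ->
      P (G @^-1` A `&` E) = (\int[P]_(w in G @^-1` A) (m1S (G w))%:E)%E.
    by move=> A mA; case: (dirB_facts _ mN PN HN _ mA).
  have ae0 := @a_ge0 R d Omega P _ _ G mG E mE m1S m1Sm m1Si H1B.
  case: c A7 lo hi => A7 lo hi.
  + case: lo => // /lo0 [Nc [mNc PNc Hc]].
    have [Ub Lb] := dirB_lo _ mN PN HN _ _ mNc PNc Hc.
    refine (aeS (aeI (aeI ae0 Ub) Lb) _) => w [[a0 u] l] /= h0 h1.
    have sp : 0 < m1S (G w) by rewrite lt0r h1 a0.
    have /andP[ll hh] := @ptB1 R ylo yhi _ _ _ _ _ sp (u a0) (l a0).
    by rewrite ge_min le_max ll hh !orbT.
  + case: hi => // /hi0 [Nc [mNc PNc Hc]].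
    have [Ub Lb] := dirB_hi _ mN PN HN _ _ mNc PNc Hc.
    refine (aeS (aeI (aeI ae0 Ub) Lb) _) => w [[a0 u] l] /= h0 h1.
    have sp : 0 < m1S (G w) by rewrite lt0r h1 a0.
    have /andP[ll hh] := @ptB2 R ylo yhi _ _ _ _ _ sp (u a0) (l a0).
    by rewrite ge_min le_max ll hh !orbT.
  + case: lo => // /lo0 [Nc [mNc PNc Hc]].
    case: hi => // /hi0 [Nc' [mNc' PNc' Hc']].
    have [Ub Lb] := dirB_lo _ mN PN HN _ _ mNc PNc Hc.
    have [Ub' Lb'] := dirB_hi _ mN PN HN _ _ mNc' PNc' Hc'.
    refine (aeS (aeI (aeI (aeI (aeI ae0 Ub) Lb) Ub') Lb') _) => w [[[[a0 u] l] u'] l'] /= h0 h1.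
    have sp : 0 < m1S (G w) by rewrite lt0r h1 a0.
    have /andP[ll hh] := @ptB3 R ylo yhi _ _ _ _ _ sp (u a0) (l a0) (u' a0) (l' a0).
    by rewrite ge_min le_max ll hh !orbT.
Qed.
End App.

Theorem corollaryD1
  (R : realType) (d : measure_display) (Omega : measurableType d)
  (P : probability Omega R)
  (dX dZ : measure_display) (TX : measurableType dX) (TZ : measurableType dZ)
  (X : Omega -> TX) (Z : Omega -> TZ) (U V Y0s Y1s : Omega -> R)
  (Pw : TX -> TZ -> R) (Q : bool -> TX -> R)
  (* measurability / ranges of the primitives *)
  (mX : measurable_fun setT X) (mZ : measurable_fun setT Z)
  (mU : measurable_fun setT U) (mV : measurable_fun setT V)
  (mY0 : measurable_fun setT Y0s) (mY1 : measurable_fun setT Y1s)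
  (mPw : measurable_fun setT (fun w : TX * TZ => Pw w.1 w.2))
  (mQ : forall b, measurable_fun setT (Q b))
  (Pw01 : forall x z, 0 <= Pw x z <= 1)
  (Q01 : forall b x, 0 <= Q b x <= 1)
  (* U | X and V | X are Uniform[0,1] *)
  (Uunif : forall (t : R) (C : set TX), 0 <= t <= 1 -> measurable C ->
     P ([set w | U w <= t] `&` (X @^-1` C)) = (t%:E * P (X @^-1` C))%E)
  (Vunif : forall (t : R) (C : set TX), 0 <= t <= 1 -> measurable C ->
     P ([set w | V w <= t] `&` (X @^-1` C)) = (t%:E * P (X @^-1` C))%E)
  (* (U,V) jointly continuously distributed (conditional on X) *)
  (UVcont : forall B : set (R * R), measurable B ->
     ((@lebesgue_measure R) \x (@lebesgue_measure R))%E B = 0%E ->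
     P ((fun w => (U w, V w)) @^-1` B) = 0%E)
  (* (A1) *)
  (A1 : cond_indep P X Z (fun w => (U w, (V w, (Y0s w, Y1s w)))))
  (* (A2) P(W) | X nondegenerate *)
  (A2 : forall (h : TX -> R) (C : set TX), measurable_fun setT h ->
     measurable C -> (0 < P (X @^-1` C))%E ->
     (0 < P ((X @^-1` C) `&` [set w | Pw (X w) (Z w) != h (X w)]))%E)
  (* (A3) *)
  (A30 : P.-integrable setT (EFin \o Y0s))
  (A31 : P.-integrable setT (EFin \o Y1s))
  (A30' : P.-integrable setT (EFin \o (fun w => Y0s w ^+ 2)))
  (A31' : P.-integrable setT (EFin \o (fun w => Y1s w ^+ 2)))
  (* (A4) 0 < P[D = 1 | X] < 1 *)
  (A4 : forall g : TX -> R,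
     cond_prob_version P X [set w | U w <= Pw (X w) (Z w)] g ->
     {ae P, forall w, 0 < g (X w) < 1})
  (* (A6) common support, and (A7) support case *)
  (A6 : rv_support P Y0s = rv_support P Y1s)
  (c : supp_case) (A7 : support_case c (rv_support P Y0s))
  (* (A8'') monotone selection, unknown direction *)
  (A8 : {ae P, forall w, 0 < Q false (X w) < Q true (X w)} \/
        {ae P, forall w, 0 < Q true (X w) < Q false (X w)})
  (* versions of the conditional expectations given (X,U) *)
  (m0Y m1Y m0S m1S DOO : TX * R -> R)
  (hm0Y : is_condexp P (fun w => (X w, U w))
            (fun w => ((V w <= Q false (X w))%R)%:R * Y0s w) m0Y)
  (hm1Y : is_condexp P (fun w => (X w, U w))
            (fun w => ((V w <= Q true (X w))%R)%:R * Y1s w) m1Y)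
  (hm0S : is_condexp P (fun w => (X w, U w))
            (fun w => ((V w <= Q false (X w))%R)%:R) m0S)
  (hm1S : is_condexp P (fun w => (X w, U w))
            (fun w => ((V w <= Q true (X w))%R)%:R) m1S)
  (hDOO : is_condexp_on P (fun w => (X w, U w))
            [set w | V w <= Q false (X w) /\ V w <= Q true (X w)]
            (fun w => Y1s w - Y0s w) DOO) :
  let ylo := fine (ereal_inf (EFin @` rv_support P Y0s)) in
  let yhi := fine (ereal_sup (EFin @` rv_support P Y0s)) in
  {ae P, forall w,
    let xu := (X w, U w) in
    m0S xu != 0 -> m1S xu != 0 ->
    Num.min (Delta_lo ylo yhi (m0Y xu) (m1Y xu) (m0S xu) (m1S xu) c)
            (Lambda_lo ylo yhi (m0Y xu) (m1Y xu) (m0S xu) (m1S xu) c)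
    <= DOO xu <=
    Num.max (Delta_hi ylo yhi (m0Y xu) (m1Y xu) (m0S xu) (m1S xu) c)
            (Lambda_hi ylo yhi (m0Y xu) (m1Y xu) (m0S xu) (m1S xu) c)}.
Proof.
exact: (@final_ae R d Omega P dX TX X U V Y0s Y1s Q mX mU mV mY0 mY1 mQ A30 A31
  m0Y m1Y m0S m1S DOO hm0Y hm1Y hm0S hm1S hDOO c A6 A7 A8).
Qed.
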